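(* Let $G$ be an odd unicyclic graph on $n$ vertices $1,2,\ldots,n$ with edges $e_1,\ldots,e_n$, cycle $C$ and incidence matrix $M$, and let $S=M^TM$ be its signless edge-Laplacian. Then $S$ is invertible and its inverse $S^{-1}=[s^+_{i,j}]$ is given by $$s^+_{i,j}=\frac{(-1)^{d(e_i,e_j)}}{4}\begin{cases} n & \text{if } i=j,\ e_i\in C,\\ 4|G\setminus e_i(C)| & \text{if } i=j,\ e_i\notin C,\\ -4\big|(G\setminus e_i(C))\cap(G\setminus e_j(C))\big| & \text{if } i\neq j,\ e_i,e_j\notin C,\\ 2|G\setminus\{e_i,e_j\}[P_{e_i-e_j}]|-n & \text{if } i\neq j,\ e_i,e_j\in C,\\ -2|G\setminus e_i(C)|-2|G\setminus e_j(C)| & \text{otherwise.}\end{cases}$$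
   Context: A unicyclic graph on $n$ vertices is a simple connected graph with $n$ edges; it is odd if its unique cycle $C$ has odd length. The incidence matrix $M$ is the $n\times n$ matrix with $(i,j)$-entry $1$ if vertex $i$ is incident with edge $e_j$, else $0$. For a vertex $j$ and edge $e_i=\{l_i,m_i\}$, $d(j,e_i):=\min\{d(j,l_i),d(j,m_i)\}$ ($d$ graph distance), and $d(e_i,e_k):=\min\{d(l_i,e_k),d(m_i,e_k)\}$. For an edge $e$ not on $C$, $G\setminus e[C]$ is the component of $G\setminus e$ containing $C$ and $G\setminus e(C)$ the other component; for $e$ on $C$, $G\setminus e[C]:=G\setminus e$ and $G\setminus e(C)$ is the empty graph. $|X|$ is the number of vertices of $X$, and the intersection in the third case is of vertex sets. For distinct edges $e_i,e_j$ on $C$, $P_{e_i-e_j}$ is the shortest path between endpoints of $e_i$ and of $e_j$, and $G\setminus\{e_i,e_j\}[P_{e_i-e_j}]$ is the component of $G\setminus\{e_i,e_j\}$ containing $P_{e_i-e_j}$. *)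

(* Defs.v *)
From HB Require Import structures.
From mathcomp Require Import all_boot all_order all_algebra.
Set Implicit Arguments. Unset Strict Implicit. Unset Printing Implicit Defensive.
Import Order.TTheory GRing.Theory Num.Theory.

(* A graph on vertex set 'I_n with n edges indexed by 'I_n:
   edge e has endpoints l e and m e. *)
Section UnicyclicGraph.
Variables (n : nat) (l m : 'I_n -> 'I_n).

Definition simple_edges : Prop :=
  (forall e, l e != m e) /\
  (forall e f, [set l e; m e] = [set l f; m f] -> e = f).

Definition adjw (F : {set 'I_n}) : rel 'I_n :=
  fun x y => [exists e, (e \notin F) && ([set l e; m e] == [set x; y])].

Definition adj : rel 'I_n := adjw set0.

Definition connected_graph : Prop := forall x y, connect adj x y.

Definition is_cycle_edges (C : {set 'I_n}) : Prop :=
  exists k (vs : 'I_k -> 'I_n),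
    [/\ 3 <= k, injective vs,
        (forall i : 'I_k, exists e, [set l e; m e] = [set vs i; vs (ordS i)]) &
        C = [set e | [exists i : 'I_k, [set l e; m e] == [set vs i; vs (ordS i)]]]].

Fixpoint ball (x : 'I_n) (k : nat) : {set 'I_n} :=
  if k is k'.+1 then ball x k' :|: [set y | [exists z in ball x k', adj z y]]
  else [set x].

(* graph distance: least k with y in ball x k (the graph being connected,
   such a k < n exists) *)
Definition dist (x y : 'I_n) : nat := find (fun k => y \in ball x k) (iota 0 n).

Definition dist_ve (j e : 'I_n) : nat := minn (dist j (l e)) (dist j (m e)).

Definition dist_ee (ei ek : 'I_n) : nat := minn (dist_ve (l ei) ek) (dist_ve (m ei) ek).

(* G \ e (C): vertices of G \ e lying in a component that contains no vertex
   of C; empty if e is on C *)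
Definition side (C : {set 'I_n}) (e : 'I_n) : {set 'I_n} :=
  if e \in C then set0
  else [set v | ~~ [exists f in C, connect (adjw [set e]) v (l f)]].

(* G \ {e_i, e_j} [P_{e_i - e_j}]: the component of G \ {e_i, e_j} containing
   the endpoint of e_i at which the shortest path P to e_j starts *)
Definition compP (ei ej : 'I_n) : {set 'I_n} :=
  let u := if dist_ve (l ei) ej <= dist_ve (m ei) ej then l ei else m ei in
  [set v | connect (adjw [set ei; ej]) u v].

Definition incidence : 'M[rat]_n :=
  \matrix_(i, j) (if (i == l j) || (i == m j) then 1%R else 0%R).

Local Open Scope ring_scope.

Definition inv_formula (C : {set 'I_n}) : 'M[rat]_n :=
  \matrix_(i, j)
    ((-1) ^+ (dist_ee i j) / 4 *
     (if i == j then
        (if i \in C then n%:R else 4 * (#|side C i|)%:R)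
      else if (i \notin C) && (j \notin C) then
        - 4 * (#|side C i :&: side C j|)%:R
      else if (i \in C) && (j \in C) then
        2 * (#|compP i j|)%:R - n%:R
      else - 2 * (#|side C i|)%:R - 2 * (#|side C j|)%:R)).

End UnicyclicGraph.

(* Main.v *)
Require Import Defs.
From HB Require Import structures.
From mathcomp Require Import all_boot all_order all_algebra zify ring.
Set Implicit Arguments. Unset Strict Implicit. Unset Printing Implicit Defensive.
Import Order.TTheory GRing.Theory Num.Theory.

Section Dist.
Variables (n : nat) (l m : 'I_n -> 'I_n).

Fixpoint ballF (F : {set 'I_n}) (x : 'I_n) (k : nat) : {set 'I_n} :=
  if k is k'.+1 then ballF F x k' :|: [set y | [exists z in ballF F x k', adjw l m F z y]]
  else [set x].

Definition distF F x y := find (fun k => y \in ballF F x k) (iota 0 n).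

Lemma ball_ballF x k : ball l m x k = ballF set0 x k.
Proof. by elim: k => //= k ->. Qed.

Lemma dist_distF x y : dist l m x y = distF set0 x y.
Proof. by rewrite /dist /distF; apply: eq_find => k /=; rewrite ball_ballF. Qed.

Lemma adjwP (F : {set 'I_n}) x y : reflect (exists2 e, e \notin F & [set l e; m e] = [set x; y]) (adjw l m F x y).
Proof.
apply: (iffP existsP) => [[e /andP[He /eqP E]]|[e He E]]; first by exists e.
by exists e; rewrite He E eqxx.
Qed.

Lemma adjw_sym (F : {set 'I_n}) : symmetric (adjw l m F).
Proof.
move=> x y; apply/adjwP/adjwP => -[e He E]; exists e => //; by rewrite E setUC.
Qed.

Lemma connectw_sym (F : {set 'I_n}) : connect_sym (adjw l m F).
Proof. apply: sym_connect_sym; exact: adjw_sym. Qed.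

Variable F : {set 'I_n}.
Local Notation adjF := (adjw l m F).
Local Notation ballx := (ballF F).

Lemma ballS x k : ballx x k \subset ballx x k.+1.
Proof. by rewrite /= subsetUl. Qed.

Lemma ball_mono x k k' : k <= k' -> ballx x k \subset ballx x k'.
Proof.
move=> /subnK <-; elim: (k' - k) => // d IH.
by rewrite addSn (subset_trans IH (ballS _ _)).
Qed.

Lemma ball_adj x k y z : y \in ballx x k -> adjF y z -> z \in ballx x k.+1.
Proof.
by move=> Hy Hyz; rewrite /= inE; apply/orP; right; rewrite inE; apply/existsP; exists y; rewrite Hy.
Qed.

Lemma ball_path x p : path adjF x p -> last x p \in ballx x (size p).
Proof.
elim/last_ind: p => [|p z IH]; first by rewrite /= inE.
rewrite rcons_path last_rcons size_rcons => /andP[/IH H1 H2].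
exact: ball_adj H1 H2.
Qed.

Lemma ball_connect x k y : y \in ballx x k -> connect adjF x y.
Proof.
elim: k y => [|k IH] y /=; first by rewrite inE => /eqP ->.
rewrite inE => /orP[/IH //|]; rewrite inE => /existsP[z /andP[/IH Hz Hzy]].
exact: connect_trans Hz (connect1 Hzy).
Qed.

Lemma ball_src x z k : adjF x z -> ballx z k \subset ballx x k.+1.
Proof.
move=> Hxz; elim: k => [|k IH].
  apply/subsetP => y; rewrite /= inE => /eqP ->; rewrite !inE; apply/orP; right; apply/existsP; exists x; by rewrite inE eqxx.
apply/subsetP => y; rewrite inE => /orP[Hy|].
  by rewrite inE (subsetP IH y Hy).
rewrite inE => /existsP[w /andP[Hw Hwy]].
exact: ball_adj (subsetP IH w Hw) Hwy.
Qed.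

Local Notation distx := (distF F).

Lemma dist_le_n x y : distx x y <= n.
Proof. by rewrite /distF -[X in _ <= X](size_iota 0 n) find_size. Qed.

Lemma dist_min x y k : k < distx x y -> y \notin ballx x k.
Proof.
move=> Hk; have Hkn : k < n by exact: leq_trans Hk (dist_le_n _ _).
by have := before_find 0 Hk; rewrite nth_iota // add0n => ->.
Qed.

Lemma dist_ball x y : connect adjF x y -> y \in ballx x (distx x y) /\ distx x y < n.
Proof.
move=> /connectP[p Hp ->].
have [p' Hp' Hu _] := shortenP Hp.
have Hs : size p' < n.
  have := card_uniqP Hu; rewrite /= => <-.
  by apply: leq_trans (max_card _) _; rewrite card_ord.
have Hb := ball_path Hp'.
have Hhas : has (fun k => last x p' \in ballx x k) (iota 0 n).
  by apply/hasP; exists (size p') => //; rewrite mem_iota.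
have Hlt : distx x (last x p') < n by rewrite /distF -[X in _ < X](size_iota 0 n) -has_find.
split=> //; have := nth_find 0 Hhas; rewrite nth_iota //.
Qed.

Lemma ball_dist x y k : connect adjF x y -> (y \in ballx x k) = (distx x y <= k).
Proof.
move=> Hc; have [Hb _] := dist_ball Hc.
case: leqP => Hk; first exact: subsetP (ball_mono _ Hk) _ Hb.
by apply/negbTE/dist_min.
Qed.

Lemma dist_refl x : distx x x = 0.
Proof. by apply/eqP; rewrite -leqn0 -ball_dist ?connect0 //= inE. Qed.

Lemma dist0 x y : connect adjF x y -> distx x y = 0 -> y = x.
Proof. by move=> Hc H0; have [Hb _] := dist_ball Hc; move: Hb; rewrite H0 /= inE => /eqP. Qed.

Lemma dist_adj x y z : connect adjF x y -> adjF y z -> distx x z <= (distx x y).+1.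
Proof.
move=> Hc Hyz; have [Hb _] := dist_ball Hc.
have Hc' : connect adjF x z by apply: connect_trans Hc (connect1 Hyz).
by rewrite -ball_dist //; exact: ball_adj Hb Hyz.
Qed.

Lemma dist_desc x y : connect adjF x y -> y != x ->
  exists2 z, adjF z y & (distx x z).+1 = distx x y.
Proof.
move=> Hc Hne; have [Hb _] := dist_ball Hc.
case Hd: (distx x y) Hb => [|d] /=.
  by rewrite inE (negbTE Hne).
rewrite inE => /orP[Hy|].
  by have := dist_min (k := d) (x := x) (y := y); rewrite Hd ltnSn Hy => /(_ isT).
rewrite inE => /existsP[z /andP[Hz Hzy]]; exists z => //.
have Hcz : connect adjF x z by exact: ball_connect Hz.
have H1 : distx x z <= d by rewrite -ball_dist.
have H2 := dist_adj Hcz Hzy; rewrite Hd in H2.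
by apply/eqP; rewrite eqSS eqn_leq H1 -ltnS.
Qed.

Lemma dist_src x y z : connect adjF x y -> adjF x z -> distx x y <= (distx z y).+1.
Proof.
move=> Hc Hxz.
have Hzy : connect adjF z y by apply: connect_trans _ Hc; apply: connect1; rewrite adjw_sym.
have [Hb _] := dist_ball Hzy.
by rewrite -ball_dist //; exact: subsetP (ball_src _ Hxz) _ Hb.
Qed.

Lemma dist_sym_le d x y : distx y x = d -> connect adjF x y -> distx x y <= d.
Proof.
elim: d x y => [|d IH] x y Hd Hc.
  have Hcy : connect adjF y x by rewrite connectw_sym.
  by rewrite (dist0 Hcy Hd) dist_refl.
have Hcy : connect adjF y x by rewrite connectw_sym.
have Hne : x != y by apply/eqP => Exy; rewrite Exy dist_refl in Hd.
have [z Hzx Hz] := dist_desc Hcy Hne.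
rewrite Hd in Hz; case: Hz => Hz.
have Hcz : connect adjF z y.
  apply: connect_trans (connect1 Hzx) Hc.
have := IH z y Hz Hcz => H.
have Hxz : adjF x z by rewrite adjw_sym.
exact: leq_trans (dist_src Hc Hxz) _.
Qed.

Lemma dist_sym x y : connect adjF x y -> distx x y = distx y x.
Proof.
move=> Hc; have Hc' : connect adjF y x by rewrite connectw_sym.
by apply/eqP; rewrite eqn_leq !dist_sym_le.
Qed.

End Dist.

Lemma set2_eq (T : finType) (a b c d : T) : [set a; b] = [set c; d] ->
  (a = c /\ b = d) \/ (a = d /\ b = c).
Proof.
move=> E.
have Ha : a \in [set c; d] by rewrite -E !inE eqxx.
have Hb : b \in [set c; d] by rewrite -E !inE eqxx orbT.
have Hc : c \in [set a; b] by rewrite E !inE eqxx.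
have Hd : d \in [set a; b] by rewrite E !inE eqxx orbT.
move: Ha Hb Hc Hd; rewrite !inE.
by do 4 (case/orP=> /eqP ?); subst; auto.
Qed.

Lemma odd_neq a b : a <= b.+1 -> b <= a.+1 -> a != b -> odd a != odd b.
Proof.
move=> H1 H2 H3.
have [Hab|Hab] : b = a.+1 \/ a = b.+1 by lia.
  by rewrite Hab /=; case: (odd a).
by rewrite Hab /=; case: (odd b).
Qed.

Section BFS.
Variables (n : nat) (l m : 'I_n -> 'I_n) (F : {set 'I_n}) (x : 'I_n).
Hypothesis Hconn : forall y, connect (adjw l m F) x y.
Local Notation d := (distF l m F x).

Definition parent_ok e y := (e \notin F) &&
  (((l e == y) && ((d (m e)).+1 == d y)) || ((m e == y) && ((d (l e)).+1 == d y))).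

Definition par y := odflt y [pick e | parent_ok e y].

Lemma par_ok y : y != x -> parent_ok (par y) y.
Proof.
move=> Hne; rewrite /par; case: pickP => [e He //|H0].
have [z Hzy Hz] := dist_desc (Hconn y) Hne.
move/adjwP: Hzy => [e He E]; have := H0 e; rewrite /parent_ok He /=.
case: (set2_eq E) => -[-> ->]; rewrite !eqxx Hz eqxx //= orbT //.
Qed.

Definition EqSet := [set e | (e \notin F) && (d (l e) == d (m e))].

Lemma bfs_count : #|EqSet| + n.-1 <= #|~: F|.
Proof.
have Hsub : par @: [set~ x] \subset ~: F :\: EqSet.
  apply/subsetP => e /imsetP[y]; rewrite !inE => Hne ->.
  move: (par_ok Hne); rewrite /parent_ok => /andP[-> H] /=; rewrite andbT.
  apply/negP => /eqP E3.
  by case/orP: H => /andP[/eqP E1 /eqP E2]; rewrite E1 in E3; lia.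
have Hinj : {in [set~ x] &, injective par}.
  move=> y y'; rewrite !inE => Hy Hy' E.
  move: (par_ok Hy) (par_ok Hy'); rewrite E /parent_ok.
  set e := par y'.
  move=> /andP[_ H1] /andP[_ H2].
  case/orP: H1 => /andP[/eqP E1 /eqP E2]; case/orP: H2 => /andP[/eqP E3 /eqP E4].
  - by rewrite -E1 -E3.
  - rewrite E1 in E4; rewrite E3 in E2; lia.
  - rewrite E1 in E4; rewrite E3 in E2; lia.
  - by rewrite -E1 -E3.
have := subset_leq_card Hsub; rewrite (card_in_imset Hinj) cardsC1 cardsD.
have -> : ~: F :&: EqSet = EqSet.
  by apply/setIidPr/subsetP => e; rewrite !inE => /andP[].
have : #|EqSet| <= #|~: F|.
  by apply: subset_leq_card; apply/subsetP => e; rewrite !inE => /andP[].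
rewrite card_ord => H1; by rewrite -leq_subRL.
Qed.

End BFS.

Lemma adjw_edge n (l m : 'I_n -> 'I_n) (F : {set 'I_n}) e x y :
  e \notin F -> [set l e; m e] = [set x; y] -> adjw l m F x y.
Proof. by move=> He E; apply/adjwP; exists e. Qed.

Lemma adjw_lm n (l m : 'I_n -> 'I_n) (F : {set 'I_n}) e :
  e \notin F -> adjw l m F (l e) (m e).
Proof. by move=> He; apply: adjw_edge He _. Qed.

Lemma connect_weak n (l m : 'I_n -> 'I_n) (F F' : {set 'I_n}) x y :
  F \subset F' -> connect (adjw l m F') x y -> connect (adjw l m F) x y.
Proof.
move=> HF; apply: connect_sub => u v /adjwP[e He E]; apply: connect1.
apply/adjwP; exists e => //; apply: contra He; exact: subsetP HF e.
Qed.

Lemma connect_split n (l m : 'I_n -> 'I_n) (F : {set 'I_n}) e x y :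
  connect (adjw l m F) x y ->
  [\/ connect (adjw l m (e |: F)) x y, connect (adjw l m (e |: F)) (l e) y
    | connect (adjw l m (e |: F)) (m e) y].
Proof.
move=> /connectP[p Hp Ey]; elim: p x Hp Ey => [|z p IH] x /=.
  by move=> _ ->; apply: Or31; exact: connect0.
move=> /andP[Hxz Hp] Ey; case: (IH z Hp Ey) => H; [|by apply: Or32|by apply: Or33].
move/adjwP: Hxz => [f Hf E].
case: (f =P e) => [Efe|Hfe].
  subst f; case: (set2_eq E) => -[E1 E2].
  - by rewrite -E2 in H; apply: Or33.
  - by rewrite -E1 in H; apply: Or32.
apply: Or31; apply: connect_trans _ H; apply: connect1; apply/adjwP; exists f => //.
by rewrite !inE negb_or Hf andbT; apply/eqP.
Qed.

Section Cycle.
Variables (n : nat) (l m : 'I_n -> 'I_n) (C : {set 'I_n}) (k : nat) (vs : 'I_k -> 'I_n).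
Hypotheses (Hs : simple_edges l m) (Hk3 : 3 <= k) (Hvs : injective vs)
  (Hedge : forall i : 'I_k, exists e, [set l e; m e] = [set vs i; vs (ordS i)])
  (HC : C = [set e | [exists i : 'I_k, [set l e; m e] == [set vs i; vs (ordS i)]]]).

Definition Ep (p : 'I_k) : 'I_n := odflt (vs p) [pick e | [set l e; m e] == [set vs p; vs (ordS p)]].

Lemma Ep_spec p : [set l (Ep p); m (Ep p)] = [set vs p; vs (ordS p)].
Proof.
rewrite /Ep; case: pickP => [e /eqP //|H0].
by have [e E] := Hedge p; have := H0 e; rewrite E eqxx.
Qed.

Lemma Ep_inC p : Ep p \in C.
Proof. by rewrite HC inE; apply/existsP; exists p; rewrite Ep_spec. Qed.

Lemma C_Ep e : e \in C -> exists p, e = Ep p.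
Proof.
rewrite HC inE => /existsP[p /eqP E]; exists p.
by apply: Hs.2; rewrite E Ep_spec.
Qed.

Lemma ordS_val (p : 'I_k) : nat_of_ord (ordS p) = if p.+1 < k then p.+1 else 0.
Proof.
rewrite /= ; case: ltnP => H; first by rewrite modn_small.
have -> : p.+1 = k by have := ltn_ord p; lia.
by rewrite modnn.
Qed.

Lemma Ep_inj : injective Ep.
Proof.
move=> p q E; have := Ep_spec p; rewrite E Ep_spec => /set2_eq [[/Hvs -> //]|[/Hvs E1 /Hvs E2]].
have := ordS_val p; have := ordS_val q; rewrite -E1 E2.
have := ltn_ord p; have := ltn_ord q.
move=> A B; case: ltnP => H1; case: ltnP => H2 => C' D'; exfalso; lia.
Qed.

Lemma card_C : #|C| = k.
Proof.
have -> : C = Ep @: setT.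
  apply/setP => e; apply/idP/imsetP => [/C_Ep[p ->]|[p _ ->]]; last exact: Ep_inC.
  by exists p.
by rewrite card_imset ?cardsT ?card_ord //; exact: Ep_inj.
Qed.

Lemma Ep_ends p : (l (Ep p) = vs p /\ m (Ep p) = vs (ordS p)) \/
                  (l (Ep p) = vs (ordS p) /\ m (Ep p) = vs p).
Proof. exact: set2_eq (Ep_spec p). Qed.

Hypothesis Hodd : odd #|C|.

Lemma odd_cycle (c : 'I_n -> bool) : ~ (forall e, e \in C -> c (l e) != c (m e)).
Proof.
move=> Hc.
have Hp : forall p, c (vs p) != c (vs (ordS p)).
  move=> p; have := Hc _ (Ep_inC p).
  by case: (Ep_ends p) => -[-> ->] //; rewrite eq_sym.
have Hk0 : 0 < k by lia.
have Hj : forall j (Hj : j < k), c (vs (Ordinal Hj)) = c (vs (Ordinal Hk0)) (+) odd j.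
  elim=> [|j IH] Hj.
    by rewrite addbF; congr (c (vs _)); apply: val_inj.
  have Hj' : j < k by lia.
  have E : ordS (Ordinal Hj') = Ordinal Hj.
    apply: val_inj; rewrite /= modn_small //. 
  have := Hp (Ordinal Hj'); rewrite E IH /=.
  by case: (c (vs (Ordinal Hk0))); case: (c (vs (Ordinal Hj))); case: (odd j).
have Hk1 : k.-1 < k by lia.
have E : ordS (Ordinal Hk1) = Ordinal Hk0.
  by apply: ord_inj; rewrite ordS_val /=; case: ltnP => //; lia.
have := Hp (Ordinal Hk1); rewrite E (Hj _ Hk1).
have Ho := Hodd; rewrite card_C in Ho.
have : odd k.-1 = false by move: Ho; have : 0 < k := Hk0; case: (k) => //= k' _ ; case: (odd k').
by move=> ->; rewrite addbF eqxx.
Qed.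

Lemma cyc_seg (F : {set 'I_n}) a b (Ha : a < k) (Hb : b < k) :
  a <= b -> (forall p : 'I_k, a <= p < b -> Ep p \notin F) ->
  connect (adjw l m F) (vs (Ordinal Ha)) (vs (Ordinal Hb)).
Proof.
elim: b Hb => [|b IH] Hb Hab HF.
  by have -> : Ordinal Ha = Ordinal Hb by apply: val_inj => /=; lia.
case: (ltngtP a b.+1) Hab => // [Hlt|Heq] _; last first.
  by have -> : Ordinal Ha = Ordinal Hb by apply: val_inj.
have Hb' : b < k by lia.
apply: connect_trans (IH Hb' _ _) _; first by lia.
  by move=> p /andP[H1 H2]; apply: HF; rewrite H1 /=; lia.
have E : ordS (Ordinal Hb') = Ordinal Hb by apply: ord_inj; rewrite ordS_val /= Hb.
apply: connect1; apply: (adjw_edge (e := Ep (Ordinal Hb'))).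
  by apply: HF => /=; lia.
by rewrite Ep_spec E.
Qed.

Lemma cyc_conn (F : {set 'I_n}) (j : 'I_k) :
  (forall p, p != j -> Ep p \notin F) ->
  forall a b : 'I_k, connect (adjw l m F) (vs a) (vs b).
Proof.
move=> HF.
have Hk0 : 0 < k by lia.
suff H0 : forall a : 'I_k, connect (adjw l m F) (vs a) (vs (Ordinal Hk0)).
  move=> a b; apply: connect_trans (H0 a) _; rewrite connectw_sym; exact: H0.
move=> [a Ha].
case: (leqP a j) => Haj.
  rewrite connectw_sym; apply: cyc_seg => // p /andP[_ Hp]; apply: HF.
  by apply/eqP => E; rewrite E in Hp; lia.
have Hk1 : k.-1 < k by lia.
apply: connect_trans (_ : connect _ _ (vs (Ordinal Hk1))) _.
  apply: cyc_seg; first by lia.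
  by move=> p /andP[Hp _]; apply: HF; apply/eqP => E; rewrite E in Hp; lia.
have E : ordS (Ordinal Hk1) = Ordinal Hk0.
  by apply: ord_inj; rewrite ordS_val /=; case: ltnP => //; lia.
apply: connect1; apply: (adjw_edge (e := Ep (Ordinal Hk1))).
  apply: HF; apply/eqP => E'; move: Haj; rewrite -E' /=; lia.
by rewrite Ep_spec E.
Qed.

End Cycle.

Section Graph.
Variables (n : nat) (l m : 'I_n -> 'I_n) (C : {set 'I_n}) (k : nat) (vs : 'I_k -> 'I_n).
Hypotheses (Hs : simple_edges l m) (Hk3 : 3 <= k) (Hvs : injective vs)
  (Hedge : forall i : 'I_k, exists e, [set l e; m e] = [set vs i; vs (ordS i)])
  (HC : C = [set e | [exists i : 'I_k, [set l e; m e] == [set vs i; vs (ordS i)]]])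
  (Hodd : odd #|C|) (Hc : connected_graph l m).

Local Notation G := (adjw l m set0).
Local Notation D := (distF l m set0).
Local Notation Ep := (Ep l m vs).

Lemma Gc x y : connect G x y. Proof. exact: Hc. Qed.

Lemma Dsym x y : D x y = D y x. Proof. exact: dist_sym (Gc _ _). Qed.

Lemma Dadj x y z : G y z -> D x z <= (D x y).+1.
Proof. exact: dist_adj (Gc _ _). Qed.

Lemma Gedge e : G (l e) (m e).
Proof. by apply: adjw_lm; rewrite inE. Qed.

Lemma eq_in_C (F : {set 'I_n}) x : (forall y, connect (adjw l m F) x y) ->
  (forall e, e \in C -> e \notin F) ->
  exists2 e, e \in C & distF l m F x (l e) = distF l m F x (m e).
Proof.
move=> Hx HF.
case: (boolP [exists e in C, distF l m F x (l e) == distF l m F x (m e)]).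
  by move=> /existsP[e /andP[He /eqP E]]; exists e.
rewrite negb_exists => /forallP Hne; exfalso.
apply: (odd_cycle Hs Hk3 Hvs Hedge HC Hodd (c := fun v => odd (distF l m F x v))).
move=> e He; have := Hne e; rewrite He /= => H.
have Ha := adjw_lm l m (HF e He).
apply: odd_neq H.
- by apply: dist_adj (Hx _) _; rewrite adjw_sym.
- exact: dist_adj (Hx _) Ha.
Qed.

Lemma nC_flip e x : e \notin C -> odd (D x (l e)) != odd (D x (m e)).
Proof.
move=> He.
have Hcard : #|EqSet l m set0 x| <= 1.
  have := bfs_count (x := x) (F := set0) (fun y => Gc x y).
  rewrite setC0 cardsT card_ord; have := ltn_ord x; lia.
have [f Hf Ef] := eq_in_C (fun y => Gc x y) (fun e _ => negbT (in_set0 e)).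
apply: odd_neq.
- by apply: Dadj; rewrite adjw_sym; apply: Gedge.
- exact: Dadj (Gedge e).
apply/eqP => E.
move/card_le1_eqP: Hcard => /(_ e f) Eef; have {}Eef : f = e by apply: Eef; rewrite !inE /= ?E ?Ef eqxx.
by rewrite -Eef Hf in He.
Qed.

Lemma reroute e : connect (adjw l m [set e]) (l e) (m e) ->
  forall x y, connect (adjw l m [set e]) x y.
Proof.
move=> Hlm x y; apply: connect_sub _ _ _ (Gc x y) => u v /adjwP[f _ E].
case: (f =P e) => [Efe|Hfe].
  subst f; case: (set2_eq E) => -[<- <-] //; by rewrite connectw_sym.
by apply: connect1; apply/adjwP; exists f => //; rewrite inE; apply/eqP.
Qed.

Lemma nC_bridge e : e \notin C -> ~~ connect (adjw l m [set e]) (l e) (m e).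
Proof.
move=> He; apply/negP => Hlm.
have Hx := reroute Hlm (l e).
have := bfs_count Hx; rewrite cardsC1 card_ord.
have HF : forall f, f \in C -> f \notin [set e].
  by move=> f Hf; rewrite inE; apply: contraNneq He => <-.
have [f Hf Ef] := eq_in_C Hx HF.
  have Hin : f \in EqSet l m [set e] (l e).
    by rewrite inE Ef eqxx andbT inE; apply: contraNneq He => <-.
  have : 0 < #|EqSet l m [set e] (l e)| by apply/card_gt0P; exists f.
  lia.
Qed.

Lemma Hk0 : 0 < k. Proof. by apply: leq_trans Hk3. Qed.
Definition w0 := vs (Ordinal Hk0).

Lemma Cvert (F : {set 'I_n}) (j : 'I_k) : (forall p, p != j -> Ep p \notin F) ->
  forall f, f \in C -> connect (adjw l m F) (l f) w0 /\ connect (adjw l m F) (m f) w0.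
Proof.
move=> HF f Hf; have [p ->] := C_Ep Hs Hedge HC Hf.
by case: (Ep_ends Hedge p) => -[-> ->]; split; apply: (cyc_conn Hk3 Hedge Hodd HF).
Qed.

Lemma C_conn i : i \in C -> forall x y, connect (adjw l m [set i]) x y.
Proof.
move=> Hi; apply: reroute.
have [j Ej] := C_Ep Hs Hedge HC Hi.
have HF : forall p, p != j -> Ep p \notin [set i].
  move=> p Hp; rewrite inE Ej; apply: contra Hp => /eqP /(Ep_inj Hk3 Hvs Hedge) ->.
  by [].
have [H1 H2] := Cvert HF Hi.
by apply: connect_trans H1 _; rewrite connectw_sym.
Qed.

Definition ci i v := odd (distF l m [set i] (l i) v).

Lemma ci_flip i f : i \in C -> f != i -> ci i (l f) != ci i (m f).
Proof.
move=> Hi Hf.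
have Hx := C_conn Hi (l i).
have H0 : #|EqSet l m [set i] (l i)| = 0.
  have := bfs_count Hx; rewrite cardsC1 card_ord; have := ltn_ord i; lia.
have Hf' : f \notin [set i] by rewrite inE.
apply: odd_neq.
- by apply: dist_adj (Hx _) _; rewrite adjw_sym; apply: adjw_lm.
- exact: dist_adj (Hx _) (adjw_lm _ _ Hf').
apply/negP => /eqP E.
have : f \in EqSet l m [set i] (l i) by rewrite inE Hf' E eqxx.
by move/card0_eq: H0 => ->.
Qed.

Lemma ci_l i : ci i (l i) = false.
Proof. by rewrite /ci dist_refl. Qed.

Lemma ci_m i : i \in C -> ci i (m i) = false.
Proof.
move=> Hi; apply/negP => Hm.
apply: (odd_cycle Hs Hk3 Hvs Hedge HC Hodd (c := ci i)) => e He.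
case: (e =P i) => [->|Hne]; first by rewrite ci_l Hm.
by apply: ci_flip => //; apply/eqP.
Qed.

Definition dve x e := minn (D x (l e)) (D x (m e)).

Lemma dve_end e : dve (l e) e = 0 /\ dve (m e) e = 0.
Proof. by rewrite /dve !dist_refl minn0 min0n. Qed.

Lemma dve0 v e : dve v e = 0 -> v = l e \/ v = m e.
Proof.
rewrite /dve => H.
case: (leqP (D v (l e)) (D v (m e))) => H1.
  left; have H2 : D v (l e) = 0 by lia.
  by rewrite -(dist0 (Gc v (l e)) H2).
right; have H2 : D v (m e) = 0 by lia.
by rewrite -(dist0 (Gc v (m e)) H2).
Qed.

Lemma dve_adj v z e : G v z -> dve v e <= (dve z e).+1.
Proof.
move=> Hvz; rewrite /dve.
have H1 := dist_src (Gc v (l e)) Hvz.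
have H2 := dist_src (Gc v (m e)) Hvz.
lia.
Qed.

Lemma dve_desc v e : 0 < dve v e ->
  exists z f, [/\ f != e, [set l f; m f] = [set z; v] & (dve z e).+1 = dve v e].
Proof.
move=> Hpos.
have [w Hw Hvw] : exists2 w, (w = l e \/ w = m e) & D v w = dve v e.
  rewrite /dve; case: (leqP (D v (l e)) (D v (m e))) => H.
    by exists (l e); [left|lia].
  by exists (m e); [right|lia].
have Hne : v != w.
  by apply/eqP => E; move: Hvw Hpos; rewrite E dist_refl => <-.
have [z Hzv Hz] := dist_desc (Gc w v) Hne.
move/adjwP: (Hzv) => [f _ Ef]; exists z, f; split => //.
- apply/eqP => Efe; subst f.
  have : dve v e = 0.
    by case: (set2_eq Ef) => -[E1 E2]; [rewrite -E2|rewrite -E1]; case: (dve_end e).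
  by move=> H; rewrite H in Hpos.
- apply/eqP; rewrite eqn_leq; apply/andP; split.
  + rewrite -Hvw Dsym -Hz Dsym /dve.
    by case: Hw => ->; lia.
  + by apply: dve_adj; rewrite adjw_sym.
Qed.

Lemma gC i v : i \in C -> odd (dve v i) = ci i v.
Proof.
move=> Hi.
move Hd: (dve v i) => d; elim: d v Hd => [|d IH] v Hd.
  by case: (dve0 Hd) => ->; rewrite ?ci_l ?ci_m.
have Hp : 0 < dve v i by rewrite Hd.
have [z [f [Hf Ef Hz]]] := dve_desc Hp.
rewrite Hd in Hz; case: Hz => Hz.
have := ci_flip Hi Hf; have := IH z Hz.
case: (set2_eq Ef) => -[-> ->] /= <-; by case: (odd d); case: (ci i v).
Qed.

Lemma gflip i f : i \in C -> f != i -> odd (dve (l f) i) != odd (dve (m f) i).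
Proof. by move=> Hi Hf; rewrite !gC //; apply: ci_flip. Qed.

Section Cut.
Variables (X : {set 'I_n}) (e0 p q : 'I_n).
Hypotheses (Hp : p \in X) (Hq : q \notin X)
  (Hpq : (l e0 = p /\ m e0 = q) \/ (l e0 = q /\ m e0 = p))
  (Hcl : forall f, f != e0 -> (l f \in X) = (m f \in X)).

Lemma adj_status u v : G u v -> (u \in X) != (v \in X) -> (u = p /\ v = q) \/ (u = q /\ v = p).
Proof.
move=> /adjwP[f _ E] Hst.
case: (f =P e0) => [Ef|Hf]; last first.
  have := Hcl (f := f) (introN eqP Hf).
  by case: (set2_eq E) => -[-> ->] H; rewrite H eqxx in Hst.
subst f; case: (set2_eq E) => -[E1 E2]; case: Hpq => -[E3 E4].
- by left; rewrite -E1 -E2.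
- by right; rewrite -E1 -E2.
- by right; rewrite -E1 -E2.
- by left; rewrite -E1 -E2.
Qed.

Lemma Gpq : G p q.
Proof. by case: Hpq => -[<- <-]; [|rewrite adjw_sym]; apply: Gedge. Qed.

Lemma cut1 x y : x \in X -> y \notin X -> D x q <= D x y.
Proof.
move=> Hx; move: {2}(D x y) (leqnn (D x y)) => d; elim: d y => [|d IH] y Hd Hy.
  have E : D x y = 0 by lia.
  by move: Hy; rewrite (dist0 (Gc x y) E) Hx.
have Hne : y != x by apply: contraNneq Hy => ->.
have [z Hzy Hz] := dist_desc (Gc x y) Hne.
case: (boolP (z \in X)) => Hzx.
  case: (adj_status Hzy _); first by rewrite Hzx Hy.
    by move=> [_ ->].
  by move=> [E _]; move: Hzx; rewrite E (negbTE Hq).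
have := IH z _ Hzx; lia.
Qed.

Lemma cut2 x : x \in X -> D x q = (D x p).+1.
Proof.
move=> Hx; apply/eqP; rewrite eqn_leq; apply/andP; split; first by apply: Dadj; apply: Gpq.
have Hne : q != x by apply: contraNneq Hq => ->.
have [z Hzq Hz] := dist_desc (Gc x q) Hne.
case: (boolP (z \in X)) => Hzx.
  case: (adj_status Hzq _); first by rewrite Hzx (negbTE Hq).
    by move=> [E _]; rewrite -Hz E.
  by move=> [E _]; move: Hzx; rewrite E (negbTE Hq).
have := cut1 Hx Hzx; lia.
Qed.
End Cut.

Section Side.
Variables (e : 'I_n).
Hypothesis He : e \notin C.
Local Notation S := (side l m C e).

Lemma HFe p : p != Ordinal Hk0 -> Ep p \notin [set e].
Proof.
by move=> _; rewrite inE; apply: contraNneq He => <-; apply: (Ep_inC Hedge HC).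
Qed.

Lemma side_def v : (v \in S) = ~~ connect (adjw l m [set e]) v w0.
Proof.
rewrite /side (negbTE He) inE; congr negb; apply/existsP/idP.
  move=> [f /andP[Hf Hvf]]; apply: connect_trans Hvf _.
  by have [] := Cvert HFe Hf.
move=> Hv; exists (Ep (Ordinal Hk0)); rewrite (Ep_inC Hedge HC) /=.
apply: connect_trans Hv _; rewrite connectw_sym.
by have [] := Cvert HFe (Ep_inC Hedge HC (Ordinal Hk0)).
Qed.

Lemma side_conn u v : connect (adjw l m [set e]) u v -> (u \in S) = (v \in S).
Proof.
move=> Huv; rewrite !side_def; congr negb; apply/idP/idP => H.
  by apply: connect_trans H; rewrite connectw_sym.
exact: connect_trans Huv H.
Qed.

Lemma side_edge f : f != e -> (l f \in S) = (m f \in S).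
Proof. by move=> Hf; apply: side_conn; apply: connect1; apply: adjw_lm; rewrite inE. Qed.

Lemma side_Cout f : f \in C -> (l f \notin S) /\ (m f \notin S).
Proof. by move=> Hf; rewrite !side_def !negbK; have := Cvert HFe Hf. Qed.

Lemma side_nC f : (l f \in S) || (m f \in S) -> f \notin C.
Proof.
apply: contraL => Hf; have [H1 H2] := side_Cout Hf.
by rewrite negb_or H1 H2.
Qed.

Lemma side_xor : (l e \in S) != (m e \in S).
Proof.
case: (boolP (l e \in S)) => H1; case: (boolP (m e \in S)) => H2 //=.
  have := connect_split e (Gc (l e) w0); rewrite setU0 => -[H|H|H].
  - by move: H1; rewrite side_def H.
  - by move: H1; rewrite side_def H.
  - by move: H2; rewrite side_def H.
move: H1 H2; rewrite !side_def !negbK => H1 H2.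
have := nC_bridge He; rewrite (connect_trans H1 _) //.
by rewrite connectw_sym.
Qed.

Definition be := if l e \in S then l e else m e.
Definition ae := if l e \in S then m e else l e.

Lemma be_in : be \in S.
Proof. by rewrite /be; case: ifP => // /negbT H; have := side_xor; rewrite (negbTE H); case: (m e \in S). Qed.

Lemma ae_out : ae \notin S.
Proof.
rewrite /ae; case: ifP => H //; first by have := side_xor; rewrite H; case: (m e \in S).
by rewrite H.
Qed.

Lemma ends : (l e = be /\ m e = ae) \/ (l e = ae /\ m e = be).
Proof. by rewrite /be /ae; case: ifP => _; [left|right]. Qed.

Lemma side_to_b v : v \in S -> connect (adjw l m [set e]) be v.
Proof.
move=> Hv; have := connect_split e (Gc w0 v); rewrite setU0 => -[H|H|H].
- by move: Hv; rewrite side_def connectw_sym H.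
- have Hl : l e \in S by rewrite (side_conn H).
  by rewrite /be Hl.
- have Hm : m e \in S by rewrite (side_conn H).
  have Hl : l e \notin S by have := side_xor; rewrite Hm; case: (l e \in S).
  by rewrite /be (negbTE Hl).
Qed.

Lemma cut_in x : x \in S -> D x ae = (D x be).+1.
Proof. apply: (cut2 be_in ae_out ends side_edge). Qed.

Lemma cut_out x : x \notin S -> D x be = (D x ae).+1.
Proof.
move=> Hx; apply: (@cut2 (~: S) e); rewrite ?inE ?be_in ?ae_out //.
- by case: ends => -[-> ->]; [right|left].
- by move=> f Hf; rewrite !inE side_edge.
Qed.

Lemma ab_flip x : odd (D x be) != odd (D x ae).
Proof. by case: ends => -[<- <-]; [|rewrite eq_sym]; apply: nC_flip. Qed.

End Side.

Lemma conn_inv (F : {set 'I_n}) (A : {set 'I_n}) (Q : 'I_n -> bool) x y :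
  connect (adjw l m F) x y -> x \in A ->
  (forall u v, adjw l m F u v -> u \in A -> (v \in A) && (Q u == Q v)) -> Q x = Q y.
Proof.
move=> /connectP[p Hp ->] HA Hst; elim: p x Hp HA => [|z p IH] x //= /andP[Hxz Hp] Hx.
by have /andP[Hz /eqP ->] := Hst _ _ Hxz Hx; apply: IH.
Qed.

Lemma const_side e (Q : 'I_n -> bool) : e \notin C ->
  (forall f, f != e -> l f \in side l m C e -> Q (l f) = Q (m f)) ->
  forall v, v \in side l m C e -> Q v = Q (be e).
Proof.
move=> He HQ v Hv; symmetry; apply: (conn_inv (A := side l m C e) (side_to_b He Hv)).
  exact: be_in.
move=> u w Huw Hu; have Hw : w \in side l m C e.
  by rewrite -(side_conn He (connect1 Huw)).
rewrite Hw /=; move/adjwP: Huw => [f Hf E].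
have Hfe : f != e by apply: contra Hf => /eqP ->; rewrite inE.
have Hlf : l f \in side l m C e by case: (set2_eq E) => -[-> _].
by case: (set2_eq E) => -[E1 E2]; rewrite -E1 -E2 HQ.
Qed.

Definition dee i j := minn (dve (l i) j) (dve (m i) j).

Lemma dee_ends i j a b a' b' :
  (l i = a /\ m i = b \/ l i = b /\ m i = a) ->
  (l j = a' /\ m j = b' \/ l j = b' /\ m j = a') ->
  dee i j = minn (minn (D a a') (D a b')) (minn (D b a') (D b b')).
Proof.
rewrite /dee /dve => H1 H2.
case: H1 => -[-> ->]; case: H2 => -[-> ->]; lia.
Qed.

Lemma dee_sym i j : dee i j = dee j i.
Proof.
rewrite (@dee_ends i j (l i) (m i) (l j) (m j)); try by left.
rewrite (@dee_ends j i (l j) (m j) (l i) (m i)); try by left.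
rewrite !(Dsym (l i)) !(Dsym (m i)); lia.
Qed.

Lemma dve_out x e : e \notin C -> x \notin side l m C e -> dve x e = D x (ae e).
Proof.
move=> He Hx; have := cut_out He Hx; rewrite /dve.
by case: (ends e) => -[-> ->]; lia.
Qed.

Lemma dve_in x e : e \notin C -> x \in side l m C e -> dve x e = D x (be e).
Proof.
move=> He Hx; have := cut_in He Hx; rewrite /dve.
by case: (ends e) => -[-> ->]; lia.
Qed.

Lemma parA i j v : i != j -> i \notin C -> j \notin C ->
  v \in side l m C i -> v \in side l m C j ->
  odd (D (be i) v) (+) odd (D (be j) v) = ~~ odd (dee i j).
Proof.
move=> Hij Hi Hj Hvi Hvj.
set Si := side l m C i; set Sj := side l m C j.
have HQ : forall f, f != j -> l f \in Sj ->
    (odd (D (be i) (l f)) (+) odd (D (be j) (l f))) =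
    (odd (D (be i) (m f)) (+) odd (D (be j) (m f))).
  move=> f Hf Hlf; have HfC : f \notin C by apply: (side_nC Hj); rewrite Hlf.
  have := nC_flip (be i) HfC; have := nC_flip (be j) HfC.
  by case: (odd _); case: (odd _); case: (odd _); case: (odd _).
rewrite (const_side (Q := fun v => odd (D (be i) v) (+) odd (D (be j) v)) Hj HQ Hvj) /=.
rewrite dist_refl addbF.
have Eij := side_edge Hj Hij; have Eji : (l j \in Si) = (m j \in Si).
  by apply: side_edge => //; rewrite eq_sym.
have Hai : (ae i \in Sj) = (l i \in Sj) by case: (ends i) => -[E1 E2]; rewrite -?E1 -?E2 ?Eij.
have Hbi : (be i \in Sj) = (l i \in Sj) by case: (ends i) => -[E1 E2]; rewrite -?E1 -?E2 ?Eij.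
have Haj : (ae j \in Si) = (l j \in Si) by case: (ends j) => -[E1 E2]; rewrite -?E1 -?E2 ?Eji.
have Hbj : (be j \in Si) = (l j \in Si) by case: (ends j) => -[E1 E2]; rewrite -?E1 -?E2 ?Eji.
rewrite (dee_ends (ends i) (ends j)).
case: (boolP (l i \in Sj)) => Ii; case: (boolP (l j \in Si)) => Ij.
-
  exfalso; have Hao : ae i \notin Si := ae_out Hi.
  have Hc1 : connect (adjw l m [set i]) (ae i) w0 by move: Hao; rewrite side_def // negbK.
  have := connect_split j Hc1 => -[H|H|H].
  + have : ae i \notin Sj.
      rewrite side_def // negbK; apply: connect_weak H.
      by rewrite sub1set !inE eqxx.
    by rewrite Hai Ii.
  + have : l j \notin Si.
      rewrite side_def // negbK; apply: connect_weak H.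
      by rewrite sub1set !inE eqxx orbT.
    by rewrite Ij.
  + have : m j \notin Si.
      rewrite side_def // negbK; apply: connect_weak H.
      by rewrite sub1set !inE eqxx orbT.
    by rewrite -Eji Ij.
-
  have Hai' : ae i \in Sj by rewrite Hai.
  have Hbi' : be i \in Sj by rewrite Hbi.
  have Haj' : ae j \notin Si by rewrite Haj.
  have Hbj' : be j \notin Si by rewrite Hbj.
  have E1 := cut_in Hj Hai'; have E2 := cut_in Hj Hbi'.
  have E3 := cut_out Hi Hbj'; have E4 := cut_out Hi Haj'.
  rewrite (Dsym (be j) (be i)) (Dsym (be j) (ae i)) in E3.
  rewrite (Dsym (ae j) (be i)) (Dsym (ae j) (ae i)) in E4.
  have -> : minn (minn (D (be i) (be j)) (D (be i) (ae j)))
      (minn (D (ae i) (be j)) (D (ae i) (ae j))) = D (ae i) (be j) by clear -E1 E2 E3 E4; lia.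
  by rewrite E3 /=; case: (odd _).
-
  have Hai' : ae i \notin Sj by rewrite Hai.
  have Hbi' : be i \notin Sj by rewrite Hbi.
  have Haj' : ae j \in Si by rewrite Haj.
  have Hbj' : be j \in Si by rewrite Hbj.
  have E1 := cut_out Hj Hai'; have E2 := cut_out Hj Hbi'.
  have E3 := cut_in Hi Hbj'; have E4 := cut_in Hi Haj'.
  rewrite (Dsym (be j) (be i)) (Dsym (be j) (ae i)) in E3.
  rewrite (Dsym (ae j) (be i)) (Dsym (ae j) (ae i)) in E4.
  have -> : minn (minn (D (be i) (be j)) (D (be i) (ae j)))
      (minn (D (ae i) (be j)) (D (ae i) (ae j))) = D (be i) (ae j) by clear -E1 E2 E3 E4; lia.
  by rewrite E2 /=; case: (odd _).
-
  exfalso.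
  have Hbj' : be j \notin Si by rewrite Hbj.
  have Hc1 : connect (adjw l m [set i]) (be j) w0 by move: Hbj'; rewrite side_def // negbK.
  have Hc2 : connect (adjw l m [set j]) (be j) v := side_to_b Hj Hvj.
  have := connect_split i Hc2 => -[H|H|H].
  + move: Hvi; rewrite side_def // => /negP; apply.
    apply: connect_trans _ Hc1; rewrite connectw_sym.
    by apply: connect_weak H; rewrite sub1set !inE eqxx.
  + have : l i \in Sj.
      rewrite (side_conn Hj (connect_weak _ H)) ?Hvj //.
      by rewrite sub1set !inE eqxx orbT.
    by rewrite (negbTE Ii).
  + have : m i \in Sj.
      rewrite (side_conn Hj (connect_weak _ H)) ?Hvj //.
      by rewrite sub1set !inE eqxx orbT.
    by rewrite -Eij (negbTE Ii).
Qed.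

Lemma parB i j v : i \in C -> j \notin C -> v \in side l m C j ->
  odd (dve v i) (+) odd (D (be j) v) = ~~ odd (dee i j).
Proof.
move=> Hi Hj Hv.
have HQ : forall f, f != j -> l f \in side l m C j ->
    (odd (dve (l f) i) (+) odd (D (be j) (l f))) = (odd (dve (m f) i) (+) odd (D (be j) (m f))).
  move=> f Hf Hlf; have HfC : f \notin C by apply: (side_nC Hj); rewrite Hlf.
  have Hfi : f != i by apply: contraNneq HfC => ->.
  have := nC_flip (be j) HfC; have := gflip Hi Hfi.
  by case: (odd _); case: (odd _); case: (odd _); case: (odd _).
rewrite (const_side (Q := fun v => odd (dve v i) (+) odd (D (be j) v)) Hj HQ Hv) /=.
rewrite dist_refl addbF.
have [Hli Hmi] := side_Cout Hj Hi.
have -> : dee i j = dve (ae j) i.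
  by rewrite /dee (dve_out Hj Hli) (dve_out Hj Hmi) /dve !(Dsym (ae j)).
have Hji : j != i by apply: contraNneq Hj => ->.
have := gflip Hi Hji.
by case: (ends j) => -[-> ->]; case: (odd _); case: (odd _).
Qed.

Lemma parB' i j v : i \notin C -> j \in C -> v \in side l m C i ->
  odd (D (be i) v) (+) odd (dve v j) = ~~ odd (dee i j).
Proof. by move=> Hi Hj Hv; rewrite addbC dee_sym parB. Qed.

Definition uP i j := if dve (l i) j <= dve (m i) j then l i else m i.
Definition PP i j := [set v | connect (adjw l m [set i; j]) (uP i j) v].

Lemma parC i j v : i \in C -> j \in C -> i != j ->
  odd (dve v i) (+) odd (dve v j) = odd (dee i j) (+) (v \notin PP i j).
Proof.
move=> Hi Hj Hij.
set Q := fun v => odd (dve v i) (+) odd (dve v j).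
have Hji : j != i by rewrite eq_sym.
have HQ : forall a b, adjw l m [set i; j] a b -> true && (Q a == Q b).
  move=> a b /adjwP[f Hf E]; move: Hf; rewrite !inE negb_or => /andP[Hfi Hfj].
  have := gflip Hi Hfi; have := gflip Hj Hfj; rewrite /Q.
  by case: (set2_eq E) => -[-> ->]; case: (odd _); case: (odd _); case: (odd _); case: (odd _).
have Qconn : forall a b, connect (adjw l m [set i; j]) a b -> Q a = Q b.
  by move=> a b Hab; apply: (conn_inv (A := setT)) Hab _ _ => // u w Huw _; rewrite inE HQ.
have [Eli Emi] := dve_end i.
have Fi := gflip Hj Hij.
have Fj := gflip Hi Hji.
have Qi : Q (l i) != Q (m i) by rewrite /Q Eli Emi /=; case: (odd _) Fi; case: (odd _).
have Qj : Q (l j) != Q (m j).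
  by rewrite /Q (proj1 (dve_end j)) (proj2 (dve_end j)) !addbF.
have [u [w [Huw Hu Hlt]]] : exists u w, [/\ (l i = u /\ m i = w \/ l i = w /\ m i = u),
    uP i j = u & dve u j < dve w j].
  rewrite /uP; case: leqP => H.
    exists (l i), (m i); split => //; first by left.
    by rewrite ltn_neqAle H andbT; apply: contra Fi => /eqP ->.
  by exists (m i), (l i); split => //; right.
have Qu : Q u = odd (dee i j).
  rewrite /Q /dee; case: Huw => -[E1 E2]; rewrite -E1 -E2 in Hlt *;
  rewrite ?Eli ?Emi /=; congr odd; clear -Hlt; lia.
have Qw : Q w = ~~ odd (dee i j).
  by rewrite -Qu; case: Huw => -[<- <-] //; rewrite eq_sym in Qi; move: Qi; case: (Q _); case: (Q _).
have HuP : u \in PP i j by rewrite inE Hu connect0.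
have desc : forall d z, dve z j <= d -> dve z j < dve w j ->
    exists2 y, (y = l j \/ y = m j) & connect (adjw l m [set i; j]) z y.
  elim=> [|d IH] z Hd Hz.
    have H0 : dve z j = 0 by clear -Hd; lia.
    by exists z; [apply: dve0|apply: connect0].
  case: (posnP (dve z j)) => H0.
    by exists z; [apply: dve0|apply: connect0].
  have [z' [f [Hf Ef Hz']]] := dve_desc H0.
  have Hfi : f != i.
    apply/eqP => Efi; subst f.
    case: Huw => -[E1 E2]; case: (set2_eq Ef) => -[E3 E4];
    rewrite ?E1 ?E2 in E3 E4; subst; clear -Hz Hz'; lia.
  have Hd' : dve z' j <= d by clear -Hd Hz'; lia.
  have Hw' : dve z' j < dve w j by clear -Hz Hz'; lia.
  have [y Hy Hz'y] := IH z' Hd' Hw'.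
  exists y => //; apply: connect_trans Hz'y; apply: connect1; apply/adjwP; exists f.
    by rewrite !inE negb_or Hfi Hf.
  by rewrite Ef setUC.
have [y Hy Huy] := desc _ u (leqnn _) Hlt.
have Qy : Q y = odd (dee i j) by rewrite -Qu (Qconn _ _ Huy).
have HyP : y \in PP i j by rewrite inE Hu.
have Qy' : forall z, (z = l j \/ z = m j) -> z \notin PP i j -> Q z = ~~ odd (dee i j).
  move=> z Hz HzP.
  have Hzy : z != y by apply: contraNneq HzP => ->.
  have Qzy : Q z != Q y.
    case: Hz => Ez; case: Hy => Ey; rewrite Ez Ey in Hzy *;
      [by rewrite eqxx in Hzy | exact: Qj | by rewrite eq_sym | by rewrite eqxx in Hzy].
  by move: Qzy; rewrite Qy; case: (Q z); case: (odd _).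
case: (boolP (v \in PP i j)) => HvP.
  by rewrite addbF -Qu; symmetry; apply: Qconn; move: HvP; rewrite inE Hu.
rewrite addbT.
have [z Hz Hzv] : exists2 z, [\/ z = l i, z = m i, z = l j | z = m j] &
    connect (adjw l m [set i; j]) z v.
  have := connect_split i (Gc u v); rewrite setU0 => H1.
  have [z0 Hz0 Hz0v] : exists2 z0, z0 = l i \/ z0 = m i & connect (adjw l m [set i]) z0 v.
    case: H1 => H; [exists u|exists (l i)|exists (m i)] => //; try by [left|right].
    by case: Huw => -[E1 E2]; [left; rewrite E1|right; rewrite E2].
  have E : j |: [set i] = [set i; j] by rewrite setUC.
  case: (connect_split j Hz0v); rewrite E => H.
  - by exists z0 => //; case: Hz0 => ->; [apply: Or41|apply: Or42].
  - by exists (l j) => //; apply: Or43.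
  - by exists (m j) => //; apply: Or44.
have HzP : z \notin PP i j.
  apply: contra HvP; rewrite !inE => H; exact: connect_trans H Hzv.
change (Q v = ~~ odd (dee i j)); rewrite -(Qconn _ _ Hzv).
case: Hz => Ez.
- case: Huw => -[E1 E2].
  + by move: HzP; rewrite Ez E1 HuP.
  + by rewrite Ez E1.
- case: Huw => -[E1 E2].
  + by rewrite Ez E2.
  + by move: HzP; rewrite Ez E2 HuP.
- by apply: Qy'; [left|].
- by apply: Qy'; [right|].
Qed.

Local Open Scope ring_scope.
Import GRing.Theory.

Definition uvec i v : rat :=
  if i \in C then 2^-1 * (-1) ^+ (dve v i)
  else if v \in side l m C i then (-1) ^+ (D (be i) v) else 0.

Lemma sgn_mul a b : (-1) ^+ a * (-1) ^+ b = (-1) ^+ (odd a (+) odd b) :> rat.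
Proof. by rewrite signr_addb !signr_odd. Qed.

Lemma sgn_opp a b : odd a != odd b -> (-1) ^+ a + (-1) ^+ b = 0 :> rat.
Proof.
by rewrite -(signr_odd _ a) -(signr_odd _ b); case: (odd a); case: (odd b) => //= _;
  rewrite ?expr0 ?expr1 ?subrr ?addNr.
Qed.

Lemma uU j i : uvec i (l j) + uvec i (m j) = (j == i)%:R.
Proof.
rewrite /uvec; case: (boolP (i \in C)) => Hi.
  case: (j =P i) => [->|/eqP Hji].
    by have [-> ->] := dve_end i; rewrite expr0 mulr1 /=; field.
  by rewrite -mulrDr sgn_opp ?mulr0 //; apply: gflip.
case: (j =P i) => [->|/eqP Hji].
  have Hb := be_in Hi; have Ha := ae_out Hi.
  by case: (ends i) => -[-> ->]; rewrite ?Hb ?(negbTE Ha) dist_refl expr0 ?addr0 ?add0r.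
rewrite -(side_edge Hi Hji).
case: (boolP (l j \in side l m C i)) => Hl; last by rewrite addr0.
apply: sgn_opp; apply: nC_flip; apply: (side_nC Hi); by rewrite Hl.
Qed.

Lemma sum2 (g : 'I_n -> rat) a b : a != b ->
  \sum_v (if (v == a) || (v == b) then 1 else 0) * g v = g a + g b.
Proof.
move=> Hab; rewrite (bigD1 a) //= eqxx /= mul1r (bigD1 b) /=; last by rewrite eq_sym.
rewrite eqxx orbT mul1r big1 ?addr0 // => v /andP[Hva Hvb].
by rewrite (negbTE Hva) (negbTE Hvb) mul0r.
Qed.

Lemma sum_ind (A : {set 'I_n}) (c : rat) :
  \sum_v (if v \in A then c else 0) = #|A|%:R * c.
Proof. by rewrite -big_mkcond sumr_const mulr_natl. Qed.

Definition Umx : 'M[rat]_n := \matrix_(v, i) uvec i v.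

Lemma MtU : (incidence l m)^T *m Umx = 1%:M.
Proof.
apply/matrixP => j i; rewrite !mxE.
rewrite (eq_bigr (fun v => (if (v == l j) || (v == m j) then 1 else 0) * uvec i v)).
  by rewrite sum2 ?uU //; apply: Hs.1.
by move=> v _; rewrite !mxE.
Qed.

Lemma dee_refl i : dee i i = 0%N.
Proof. by rewrite /dee; have [-> ->] := dve_end i. Qed.

Lemma dist_ee_dee i j : dist_ee l m i j = dee i j.
Proof. by rewrite /dist_ee /dist_ve !dist_distF. Qed.

Lemma compP_PP i j : compP l m i j = PP i j.
Proof. by rewrite /compP /PP /uP /dist_ve !dist_distF. Qed.

Lemma side_C i : i \in C -> side l m C i = set0.
Proof. by move=> Hi; rewrite /side Hi. Qed.

Lemma UtU i j : (Umx^T *m Umx) i j = inv_formula l m C i j.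
Proof.
rewrite /inv_formula !mxE dist_ee_dee compP_PP.
rewrite (eq_bigr (fun v => uvec i v * uvec j v)); last by move=> v _; rewrite !mxE.
case: (i =P j) => [<-|/eqP Hij].
  rewrite dee_refl expr0.
  case: (boolP (i \in C)) => Hi.
    rewrite (eq_bigr (fun _ => 4^-1)).
      by rewrite sumr_const card_ord -[_ *+ n]mulr_natl; move: (n%:R : rat) => x; field.
    by move=> v _; rewrite /uvec Hi mulrACA sgn_mul addbb expr0 mulr1; field.
  rewrite (eq_bigr (fun v => if v \in side l m C i then (1 : rat) else 0)).
    by rewrite sum_ind mulr1; move: (#|_|%:R : rat) => x; field.
  move=> v _; rewrite /uvec (negbTE Hi); case: ifP => _; last by rewrite mul0r.
  by rewrite sgn_mul addbb.
set s := ((-1) ^+ dee i j : rat).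
case: (boolP (i \in C)) => Hi; case: (boolP (j \in C)) => Hj /=.
- rewrite (eq_bigr (fun v => - (4^-1 * s) +
      (if v \in PP i j then 2 * (4^-1 * s) else 0))).
    rewrite big_split /= sum_ind sumr_const card_ord -[_ *+ n]mulr_natl.
    by move: (#|_|%:R : rat) (n%:R : rat) s => x y z; field.
  move=> v _; rewrite /uvec Hi Hj mulrACA sgn_mul parC //.
  rewrite signr_addb signr_odd -/s; case: (v \in PP i j) => /=; rewrite ?expr0 ?expr1.
    by move: s => z; field.
  by move: s => z; field.
- rewrite (eq_bigr (fun v => if v \in side l m C j then - (2^-1 * s) else 0)).
    by rewrite sum_ind (side_C Hi) cards0; move: (#|_|%:R : rat) s => x z; field.
  move=> v _; rewrite /uvec Hi (negbTE Hj); case: ifP => Hv; last by rewrite mulr0.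
  by rewrite -mulrA sgn_mul (parB Hi Hj Hv) signrN signr_odd mulrN.
- rewrite (eq_bigr (fun v => if v \in side l m C i then - (2^-1 * s) else 0)).
    by rewrite sum_ind (side_C Hj) cards0; move: (#|_|%:R : rat) s => x z; field.
  move=> v _; rewrite /uvec Hj (negbTE Hi); case: ifP => Hv; last by rewrite mul0r.
  by rewrite mulrCA sgn_mul (parB' Hi Hj Hv) signrN signr_odd mulrN.
- rewrite (eq_bigr (fun v => if v \in side l m C i :&: side l m C j then - s else 0)).
    by rewrite sum_ind; move: (#|_|%:R : rat) s => x z; field.
  move=> v _; rewrite /uvec (negbTE Hi) (negbTE Hj) inE.
  case: (boolP (v \in side l m C i)) => Hvi; last by rewrite mul0r.
  case: (boolP (v \in side l m C j)) => Hvj; last by rewrite mulr0.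
  by rewrite sgn_mul (parA Hij Hi Hj Hvi Hvj) signrN signr_odd.
Qed.

End Graph.

Unset Implicit Arguments.
Local Open Scope ring_scope.

Theorem mainTheorem6 (n : nat) (l m : 'I_n -> 'I_n) (C : {set 'I_n}) :
  simple_edges l m ->
  connected_graph l m ->
  is_cycle_edges l m C ->
  odd #|C| ->
  let S := (incidence l m)^T *m incidence l m in
  S \in unitmx /\ invmx S = inv_formula l m C.
Proof.
move=> Hs Hc [k [vs [Hk3 Hvs Hedge HC]]] Hodd S.
have HMU := MtU Hs Hk3 Hvs Hedge HC Hodd Hc.
set M := incidence l m in HMU S *.
set U := Umx l m C in HMU *.
have HT : inv_formula l m C = U^T *m U.
  by apply/matrixP => i j; rewrite (UtU Hs Hk3 Hvs Hedge HC Hodd Hc).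
have HUM : U *m M^T = 1%:M := mulmx1C HMU.
have HTS : inv_formula l m C *m S = 1%:M.
  rewrite HT /S mulmxA -(mulmxA U^T) HUM mulmx1.
  by rewrite -(trmxK (U^T *m M)) trmx_mul trmxK HMU trmx1.
have [_ HSu] := mulmx1_unit HTS.
split => //.
by rewrite -[invmx S]mul1mx -HTS mulmxK.
Qed.
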